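(* For all $\theta,\theta'\in\Theta$ and $x\in\mathsf X$, $$\|P^\rho_\theta(x,\cdot)-P^\rho_{\theta'}(x,\cdot)\|_{TV}\le 4\sup_{i\in\{1,\dots,d\}}\Big|1-\frac{\rho(\theta'(i))}{\rho(\theta(i))}\Big|.$$
   Context: Let $\mathsf X\subset\mathbb R^D$ be measurable, $\lambda$ a nonnegative reference measure, $\pi$ a probability density on $\mathsf X$ w.r.t. $\lambda$. $\mathsf X=\bigcup_{i=1}^d\mathsf X_i$ is a partition into disjoint measurable strata, $\theta_\star(i)=\int_{\mathsf X_i}\pi\,d\lambda$, $\Theta=\{\theta\in(0,1)^d:\sum_i\theta(i)=1\}$. For a measurable $\rho:(0,1)\to(0,\infty)$ and $\theta\in\Theta$, $\pi^\rho_\theta(x)=(Z^\rho_\theta)^{-1}\sum_{i}\frac{\pi(x)}{\rho(\theta(i))}\mathbf 1_{\mathsf X_i}(x)$, $Z^\rho_\theta=\sum_i\frac{\theta_\star(i)}{\rho(\theta(i))}$. $P^\rho_\theta$ is the Metropolis–Hastings kernel with symmetric proposal density $q(x,y)$ w.r.t. $\lambda$ and target $\pi^\rho_\theta\,d\lambda$: $P^\rho_\theta f(x)=\int q(x,y)\alpha_\theta(x,y)f(y)\lambda(dy)+\big(1-\int q(x,y)\alpha_\theta(x,y)\lambda(dy)\big)f(x)$ with $\alpha_\theta(x,y)=1\wedge\frac{\pi^\rho_\theta(y)}{\pi^\rho_\theta(x)}$. For a signed measure $\nu$, $\|\nu\|_{TV}=\sup\{|\nu(f)|:\sup_{\mathsf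 X}|f|\le1\}$. *)

(* Defs.v *)
From HB Require Import structures.
From mathcomp Require Import all_boot all_order all_algebra.
From mathcomp Require Import all_classical all_reals all_analysis.
Set Implicit Arguments. Unset Strict Implicit. Unset Printing Implicit Defensive.
Import Order.TTheory GRing.Theory Num.Theory.
Local Open Scope classical_set_scope.
Local Open Scope ring_scope.

Section MH.
Context {dT : measure_display} {T : measurableType dT} {R : realType}.
Variables (mu : {measure set T -> \bar R}) (X : set T) (d : nat)
  (Xs : 'I_d -> set T) (pi : T -> R) (rho : R -> R) (q : T -> T -> R).

Definition theta_star (i : 'I_d) : R := Rintegral mu (Xs i) pi.

Definition Zrho (theta : 'I_d -> R) : R :=
  \sum_(i < d) theta_star i / rho (theta i).

Definition pi_rho (theta : 'I_d -> R) (x : T) : R :=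
  (Zrho theta)^-1 *
  \sum_(i < d) pi x / rho (theta i) * (\1_(Xs i) x : R).

Definition alpha (theta : 'I_d -> R) (x y : T) : R :=
  Num.min 1 (pi_rho theta y / pi_rho theta x).

Definition MH (theta : 'I_d -> R) (f : T -> R) (x : T) : R :=
  Rintegral mu X (fun y => q x y * alpha theta x y * f y)
  + (1 - Rintegral mu X (fun y => q x y * alpha theta x y)) * f x.

(* || P_theta(x,.) - P_theta'(x,.) ||_TV, as sup over measurable |f| <= 1 *)
Definition tv_MH (theta theta' : 'I_d -> R) (x : T) : \bar R :=
  ereal_sup [set (`|MH theta f x - MH theta' f x|)%:E | f in
    [set f : T -> R | measurable_fun X f /\ (forall y, X y -> `|f y| <= 1)]].

End MH.

Definition in_Theta {R : realType} (d : nat) (theta : 'I_d -> R) : Prop :=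
  (forall i, 0 < theta i < 1) /\ \sum_(i < d) theta i = 1.

(* Main.v *)
Require Import Defs.
From HB Require Import structures.
From mathcomp Require Import all_boot all_order all_algebra.
From mathcomp Require Import all_classical all_reals all_analysis.
From mathcomp Require Import ring lra measurable_realfun.
Set Implicit Arguments. Unset Strict Implicit. Unset Printing Implicit Defensive.
Import Order.TTheory GRing.Theory Num.Theory.
Local Open Scope classical_set_scope.
Local Open Scope ring_scope.

Lemma minL (R : realType) (s t : R) : 0 < s -> 0 <= t ->
  `|Num.min 1 s - Num.min 1 t| <= `|1 - t/s|.
Proof.
move=> s0 t0.
have -> : 1 - t/s = (s - t) / s by rewrite mulrBl divff ?gt_eqF.
rewrite normrM [`|s^-1|]gtr0_norm ?invr_gt0 // ler_pdivlMr //.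
have [h1|h1] := leP s 1; have [h2|h2] := leP t 1;
  rewrite ?(min_r h1) ?(min_r h2) ?(min_l (ltW h1)) ?(min_l (ltW h2)).
- have [h3|h3] := leP t s.
  + rewrite !ger0_norm ?subr_ge0 //; nra.
  + rewrite !ler0_norm ?subr_le0 ?(ltW h3) //; nra.
- rewrite !ler0_norm ?subr_le0 ?(ltW h2) //; try lra; nra.
- rewrite !ger0_norm ?subr_ge0 //; try lra; nra.
- rewrite subrr normr0 mul0r //.
Qed.

Lemma ratio_simp (R : realType) (Z u v : R) : 0 < Z -> (Z^-1 * u) / (Z^-1 * v) = u / v.
Proof.
move=> Z0; rewrite invfM mulrACA mulfV ?mul1r //.
by rewrite invr_eq0 gt_eqF.
Qed.

Lemma alpha_bound (R : realType) (Z Z' px py a b a' b' e : R) :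
  0 < Z -> 0 < Z' -> 0 <= px -> 0 <= py -> 0 < a -> 0 < b -> 0 < a' -> 0 < b' ->
  `|1 - a'/a| <= e -> `|1 - b'/b| <= e ->
  `|Num.min 1 ((Z^-1 * (py/b)) / (Z^-1 * (px/a)))
    - Num.min 1 ((Z'^-1 * (py/b')) / (Z'^-1 * (px/a')))| <= 2 * e.
Proof.
move=> Z0 Z'0 px0 py0 a0 b0 a'0 b'0 ha hb.
have e0 : 0 <= e by apply: le_trans ha.
rewrite !ratio_simp //.
have [->|pxn] := eqVneq px 0.
  by rewrite !mul0r invr0 !mulr0 subrr normr0 mulr_ge0.
have [->|pyn] := eqVneq py 0.
  by rewrite !mul0r subrr normr0 mulr_ge0.
have px1 : 0 < px by rewrite lt_neqAle eq_sym pxn.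
have py1 : 0 < py by rewrite lt_neqAle eq_sym pyn.
set r1 := (py / b) / (px / a).
set r2 := (py / b) / (px / a').
set r3 := (py / b') / (px / a').
have r1p : 0 < r1 by rewrite /r1 !divr_gt0.
have r2p : 0 <= r2 by rewrite /r2 ltW // !divr_gt0.
have r3p : 0 < r3 by rewrite /r3 !divr_gt0.
have e21 : r2 / r1 = a' / a.
  by rewrite /r1 /r2; field; rewrite ?gt_eqF.
have e23 : r2 / r3 = b' / b.
  by rewrite /r3 /r2; field; rewrite ?gt_eqF.
apply: (le_trans (ler_distD (Num.min 1 r2) _ _)).
rewrite mulr2n mulrDl mul1r; apply: lerD.
  by rewrite -e21 in ha; exact: (le_trans (minL r1p r2p) ha).
by rewrite distrC -e23 in hb *; exact: (le_trans (minL r3p r2p) hb).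
Qed.

Lemma int_bound (dT : measure_display) (T : measurableType dT) (R : realType)
  (mu : {measure set T -> \bar R}) (X : set T) (g h : T -> R) (c : R) :
  measurable X -> measurable_fun X h -> measurable_fun X g ->
  (forall y, X y -> 0 <= g y) -> (\int[mu]_(y in X) (g y)%:E = 1)%E -> 0 <= c ->
  (forall y, X y -> `|h y| <= c * g y) -> mu.-integrable X (EFin \o h).
Proof.
move=> mX mh mg g0 gi c0 hb.
apply/integrableP; split; first exact/measurable_EFinP.
apply: (@le_lt_trans _ _ (c%:E * \int[mu]_(y in X) (g y)%:E)%E); last first.
  by rewrite gi mule1 ltry.
rewrite -ge0_integralZl_EFin //.
apply: ge0_le_integral => //.
- apply: measurableT_comp => //; exact/measurable_EFinP.
- by apply: measurable_funeM; exact/measurable_EFinP.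
- exact/measurable_EFinP.
Qed.


Lemma sum_strat (R : realType) (T : Type) (d : nat) (Xs : 'I_d -> set T)
  (F : 'I_d -> R) (y : T) (j : 'I_d) :
  (forall i j, i != j -> Xs i `&` Xs j = set0) -> Xs j y ->
  \sum_(i < d) F i * (\1_(Xs i) y : R) = F j.
Proof.
move=> disj Xjy.
rewrite (bigD1 j) //= indicE mem_set // mulr1 big1 ?addr0 // => i ij.
rewrite indicE memNset ?mulr0 // => Xiy.
have : (Xs i `&` Xs j) y by split.
by rewrite disj.
Qed.

Lemma theta_sum (dT : measure_display) (T : measurableType dT) (R : realType)
  (mu : {measure set T -> \bar R}) (X : set T) (d : nat)
  (Xs : 'I_d -> set T) (pi : T -> R)
  (mX : measurable X)
  (mXs : forall i, measurable (Xs i))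
  (subXs : forall i, Xs i `<=` X)
  (disjXs : forall i j, i != j -> Xs i `&` Xs j = set0)
  (covXs : \bigcup_(i in [set: 'I_d]) Xs i = X)
  (mpi : measurable_fun X pi)
  (pi_ge0 : forall x, X x -> 0 <= pi x)
  (pi_int : (\int[mu]_(x in X) (pi x)%:E = 1)%E) :
  \sum_(i < d) theta_star mu Xs pi i = 1.
Proof.
have XE : X = \big[setU/set0]_(i <- enum 'I_d) Xs i.
  rewrite -bigcup_seq -covXs; apply/seteqP; split => y [i _ Hy]; exists i => //=.
  by rewrite mem_enum.
have tXs : trivIset [set` enum 'I_d] Xs.
  move=> i j _ _ [y [Hi Hj]]; apply/eqP; apply: contraT => ij.
  have : (Xs i `&` Xs j) y by split.
  by rewrite disjXs.
have H := @ge0_integral_bigsetU _ _ _ mu _ Xs (EFin \o pi) (enum 'I_d) mXs (enum_uniq _) tXs.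
move: H => /= H. rewrite -XE in H.
have fin i : (\int[mu]_(x in Xs i) (pi x)%:E)%E \is a fin_num.
  rewrite ge0_fin_numE; last by apply: integral_ge0 => y /subXs /pi_ge0; rewrite lee_fin.
  apply: (@le_lt_trans _ _ 1%E); last exact: ltry.
  rewrite -pi_int; apply: ge0_subset_integral => //.
  exact/measurable_EFinP.
rewrite /theta_star /Rintegral.
rewrite sum_fine; last by move=> i _; exact: fin.
rewrite -big_enum /= -H ?pi_int //.
exact/measurable_EFinP.
Qed.

Lemma Z_pos (dT : measure_display) (T : measurableType dT) (R : realType)
  (mu : {measure set T -> \bar R}) (X : set T) (d : nat)
  (Xs : 'I_d -> set T) (pi : T -> R) (rho : R -> R)
  (mX : measurable X)
  (mXs : forall i, measurable (Xs i))
  (subXs : forall i, Xs i `<=` X)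
  (disjXs : forall i j, i != j -> Xs i `&` Xs j = set0)
  (covXs : \bigcup_(i in [set: 'I_d]) Xs i = X)
  (mpi : measurable_fun X pi)
  (pi_ge0 : forall x, X x -> 0 <= pi x)
  (pi_int : (\int[mu]_(x in X) (pi x)%:E = 1)%E)
  (rho_gt0 : forall t, 0 < t < 1 -> 0 < rho t)
  (th : 'I_d -> R) : in_Theta th -> 0 < Zrho mu Xs pi rho th.
Proof.
move=> [Th _].
have ts := theta_sum mX mXs subXs disjXs covXs mpi pi_ge0 pi_int.
have t0 i : 0 <= theta_star mu Xs pi i.
  by apply: Rintegral_ge0 => y /subXs /pi_ge0.
have r0 i : 0 < rho (th i) by apply: rho_gt0.
have s0 i : true -> 0 <= theta_star mu Xs pi i / rho (th i).
  by move=> _; rewrite divr_ge0 // ltW.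
rewrite /Zrho lt_neqAle sumr_ge0 // andbT eq_sym.
apply/negP => /eqP /(psumr_eq0P s0) H.
have : \sum_(i < d) theta_star mu Xs pi i = 0.
  apply: big1 => i _; have := H i isT.
  by move/eqP; rewrite mulf_eq0 invr_eq0 (gt_eqF (r0 i)) orbF => /eqP.
by rewrite ts => /eqP; rewrite oner_eq0.
Qed.

Theorem lemma6p3 (dT : measure_display) (T : measurableType dT) (R : realType)
  (mu : {measure set T -> \bar R}) (X : set T) (d : nat)
  (Xs : 'I_d -> set T) (pi : T -> R) (rho : R -> R) (q : T -> T -> R)
  (mX : measurable X)
  (mXs : forall i, measurable (Xs i))
  (subXs : forall i, Xs i `<=` X)
  (disjXs : forall i j, i != j -> Xs i `&` Xs j = set0)
  (covXs : \bigcup_(i in [set: 'I_d]) Xs i = X)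
  (mpi : measurable_fun X pi)
  (pi_ge0 : forall x, X x -> 0 <= pi x)
  (pi_int : (\int[mu]_(x in X) (pi x)%:E = 1)%E)
  (mrho : measurable_fun (`]0, 1[ : set R) rho)
  (rho_gt0 : forall t, 0 < t < 1 -> 0 < rho t)
  (q_sym : forall x y, q x y = q y x)
  (q_ge0 : forall x y, 0 <= q x y)
  (mq : forall x, measurable_fun X (q x))
  (q_int : forall x, X x -> (\int[mu]_(y in X) (q x y)%:E = 1)%E) :
  forall (theta theta' : 'I_d -> R), in_Theta theta -> in_Theta theta' ->
  forall x, X x ->
  (tv_MH mu X Xs pi rho q theta theta' x <=
    (4 * \big[Num.max/0]_(i < d) `|1 - rho (theta' i) / rho (theta i)|)%:E)%E.
Proof.
move=> th th' Th Th' x Xx.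
set eps := \big[Num.max/0]_(i < d) _.
have Zp t : in_Theta t -> 0 < Zrho mu Xs pi rho t.
  exact: (Z_pos mX mXs subXs disjXs covXs mpi pi_ge0 pi_int rho_gt0).
have [jx _ Hjx] : (\bigcup_(i in [set: 'I_d]) Xs i) x by rewrite covXs.
have epsi i : `|1 - rho (th' i) / rho (th i)| <= eps.
  by rewrite /eps (bigD1 i) //= le_max lexx.
have eps0 : 0 <= eps := le_trans (normr_ge0 _) (epsi jx).
have rp t i : in_Theta t -> 0 < rho (t i).
  by move=> [Ht _]; apply: rho_gt0; exact: Ht.
have piR t y j : Xs j y ->
    pi_rho mu Xs pi rho t y = (Zrho mu Xs pi rho t)^-1 * (pi y / rho (t j)).
  by move=> Hj; rewrite /pi_rho (sum_strat (fun i => pi y / rho (t i)) disjXs Hj).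
have abound y : X y -> `|alpha mu Xs pi rho th x y - alpha mu Xs pi rho th' x y| <= 2 * eps.
  move=> Xy; have [jy _ Hjy] : (\bigcup_(i in [set: 'I_d]) Xs i) y by rewrite covXs.
  rewrite /alpha (piR th y jy) // (piR th x jx) // (piR th' y jy) // (piR th' x jx) //.
  apply: alpha_bound; rewrite ?Zp ?pi_ge0 ?rp //.
have a01 t y : in_Theta t -> X y -> 0 <= alpha mu Xs pi rho t x y <= 1.
  move=> Tt Xy; have [jy _ Hjy] : (\bigcup_(i in [set: 'I_d]) Xs i) y by rewrite covXs.
  rewrite /alpha ge_min lexx orTb andbT le_min ler01 /=.
  rewrite (piR t y jy) // (piR t x jx) //.
  have Z0 := Zp t Tt.
  by apply: divr_ge0; apply: mulr_ge0; rewrite ?invr_ge0; try exact: ltW; apply: divr_ge0; rewrite ?pi_ge0 //; apply: ltW; apply: rp.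
have malpha t : measurable_fun X (alpha mu Xs pi rho t x).
  rewrite /alpha.
  apply: (@measurable_minr _ _ _ X (cst 1) (fun y => pi_rho mu Xs pi rho t y / pi_rho mu Xs pi rho t x)).
    exact: measurable_cst.
  apply: measurable_funM => //.
  rewrite /pi_rho; apply: measurable_funM; first exact: measurable_cst.
  apply: measurable_sum => i; apply: measurable_funM.
    by apply: measurable_funM => //; exact: measurable_cst.
  exact: measurable_indic.
apply: ge_ereal_sup => _ [f [mf fb] <-]; rewrite lee_fin.
have ib (h : T -> R) (c : R) : measurable_fun X h -> 0 <= c ->
    (forall y, X y -> `|h y| <= c * q x y) -> mu.-integrable X (EFin \o h).
  move=> mh c0 hb.
  exact: (int_bound mX mh (mq x) (fun y _ => q_ge0 x y) (q_int x Xx) c0 hb).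
have fx1 := fb x Xx.
have mqA t : measurable_fun X (fun y => q x y * alpha mu Xs pi rho t x y).
  exact: measurable_funM.
have mqAF t : measurable_fun X (fun y => q x y * alpha mu Xs pi rho t x y * f y).
  exact: measurable_funM.
have i1 t : in_Theta t ->
    mu.-integrable X (EFin \o (fun y => q x y * alpha mu Xs pi rho t x y * f y)).
  move=> Tt; apply: (ib _ 1) => // y Xy.
  have /andP[A0 A1] := a01 t y Tt Xy; have := fb y Xy; have q0 := q_ge0 x y.
  rewrite !ler_norml => /andP[F0 F1]; apply/andP.
  have h1 := mulr_ge0 q0 A0; split; nra.
have i2 t : in_Theta t ->
    mu.-integrable X (EFin \o (fun y => q x y * alpha mu Xs pi rho t x y)).
  move=> Tt; apply: (ib _ 1) => // y Xy.
  have /andP[A0 A1] := a01 t y Tt Xy; have q0 := q_ge0 x y.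
  rewrite !ler_norml; apply/andP.
  have h1 := mulr_ge0 q0 A0; split; nra.
have i3 : mu.-integrable X (EFin \o (fun y =>
    q x y * alpha mu Xs pi rho th x y * f y - q x y * alpha mu Xs pi rho th' x y * f y)).
  apply: (ib _ 2) => //; first exact: measurable_funB.
  move=> y Xy.
  have /andP[A0 A1] := a01 th y Th Xy; have /andP[B0 B1] := a01 th' y Th' Xy.
  have := fb y Xy; have q0 := q_ge0 x y.
  rewrite !ler_norml => /andP[F0 F1]; apply/andP.
  have h1 := mulr_ge0 q0 A0; have h2 := mulr_ge0 q0 B0; split; nra.
have i4 : mu.-integrable X (EFin \o (fun y =>
    q x y * alpha mu Xs pi rho th x y - q x y * alpha mu Xs pi rho th' x y)).
  apply: (ib _ 2) => //; first exact: measurable_funB.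
  move=> y Xy.
  have /andP[A0 A1] := a01 th y Th Xy; have /andP[B0 B1] := a01 th' y Th' Xy.
  have q0 := q_ge0 x y.
  rewrite !ler_norml; apply/andP.
  have h1 := mulr_ge0 q0 A0; have h2 := mulr_ge0 q0 B0; split; nra.
have i1a := i1 _ Th; have i1b := i1 _ Th'; have i2a := i2 _ Th; have i2b := i2 _ Th'.
set H := fun y => (q x y * alpha mu Xs pi rho th x y * f y
                   - q x y * alpha mu Xs pi rho th' x y * f y)
                  - (q x y * alpha mu Xs pi rho th x y
                     - q x y * alpha mu Xs pi rho th' x y) * f x.
have E : MH mu X Xs pi rho q th f x - MH mu X Xs pi rho q th' f x = Rintegral mu X H.
  rewrite /H RintegralB //; last first.
    apply: (ib _ 2) => //.
      apply: measurable_funM; first exact: measurable_funB.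
      exact: measurable_cst.
    move=> y Xy.
    have /andP[A0 A1] := a01 th y Th Xy; have /andP[B0 B1] := a01 th' y Th' Xy.
    have q0 := q_ge0 x y.
    move: fx1; rewrite !ler_norml => /andP[F0 F1]; apply/andP.
    have h1 := mulr_ge0 q0 A0; have h2 := mulr_ge0 q0 B0; split; nra.
  rewrite RintegralZr // !RintegralB // /MH.
  ring.
have Hb y : X y -> `|H y| <= 4 * eps * q x y.
  move=> Xy.
  have -> : H y = q x y * (alpha mu Xs pi rho th x y - alpha mu Xs pi rho th' x y)
                  * (f y - f x) by rewrite /H; ring.
  have q0 := q_ge0 x y.
  rewrite !normrM (ger0_norm q0).
  have h1 := abound y Xy.
  have h2 : `|f y - f x| <= 2.
    by apply: (le_trans (ler_normB _ _)); have := fb y Xy; lra.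
  have n1 := normr_ge0 (alpha mu Xs pi rho th x y - alpha mu Xs pi rho th' x y).
  have n2 := normr_ge0 (f y - f x).
  have : `|alpha mu Xs pi rho th x y - alpha mu Xs pi rho th' x y| * `|f y - f x|
         <= 2 * eps * 2 by apply: ler_pM.
  move=> h3.
  rewrite -mulrA; apply: (le_trans (ler_wpM2l q0 h3)).
  by rewrite (_ : q x y * (2 * eps * 2) = 4 * eps * q x y) //; ring.
have mH : measurable_fun X H.
  apply: measurable_funB; first exact: measurable_funB.
  apply: measurable_funM; first exact: measurable_funB.
  exact: measurable_cst.
have iH : mu.-integrable X (EFin \o H).
  apply: (ib _ (4 * eps)) => //; first by rewrite mulr_ge0.
have iaH : mu.-integrable X (EFin \o (fun y => `|H y|)).
  apply: (ib _ (4 * eps)) => //; first exact: measurableT_comp.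
    by rewrite mulr_ge0.
  by move=> y Xy; rewrite normr_id; exact: Hb.
have iq : mu.-integrable X (EFin \o (fun y => 4 * eps * q x y)).
  apply: (ib _ (4 * eps)) => //.
  - by apply: measurable_funM => //; exact: measurable_cst.
  - by rewrite mulr_ge0.
  - by move=> y Xy; rewrite ger0_norm // mulr_ge0 // mulr_ge0.
rewrite E; apply: (le_trans (le_normr_Rintegral mX iH)).
apply: (le_trans (le_Rintegral mX iaH iq Hb)).
rewrite RintegralZl //; last first.
  apply: (ib _ 1) => //; by move=> y Xy; rewrite mul1r ger0_norm.
by rewrite /Rintegral q_int //= mulr1.
Qed.
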